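(* Let $f:\mathbb{R}^d\to\mathbb{R}$ be convex and differentiable with $L$-Lipschitz gradient, with bounded level sets and a minimizer $x^*$. For $x\in\mathbb{R}^d$ let $\phi_x(\lambda)=f(x-\lambda\nabla f(x))$. Let $x_0\in\mathbb{R}^d$ and $x_{k+1}=x_k-\lambda_k\nabla f(x_k)$ with $\lambda_k=\max\{\lambda>0:\ \phi_{x_k}(2\lambda)\le\phi_{x_k}(\lambda)+\tfrac{\lambda}{2}\phi_{x_k}'(0)\}$ (assumed to be attained). Then $\lambda_k\ge 1/(3L)$ for all $k$, and there is a constant $D$ depending only on $x_0$, $x^*$, $L$ such that $f(x_k)-f(x^* )\le D/k$ for all $k\ge1$. (This is the case $h\equiv0$ of the non-accelerated composite scheme, for which $G^{f}_{\lambda h}=\nabla f$.)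
   Context: $\mathbb{R}^d$ carries the standard inner product and Euclidean norm $\|\cdot\|$; $\phi_x'(0)=-\|\nabla f(x)\|^2$ denotes the derivative of $\phi_x$ at $0$. *)

(* Defs.v *)
From HB Require Import structures.
From mathcomp Require Import all_boot all_order all_algebra.
From mathcomp Require Import all_classical all_reals all_analysis.
Set Implicit Arguments. Unset Strict Implicit. Unset Printing Implicit Defensive.
Import Order.TTheory GRing.Theory Num.Theory.
Import numFieldNormedType.Exports.
Local Open Scope ring_scope.

(* Standard (Euclidean) inner product and norm on R^d.  (The library's
   norm on matrices is the sup-norm, so we define the Euclidean one.) *)
Definition dotv (R : realType) (d : nat) (u v : 'rV[R]_d) : R :=
  \sum_(i < d) u 0 i * v 0 i.

Definition enorm (R : realType) (d : nat) (u : 'rV[R]_d) : R :=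
  Num.sqrt (dotv u u).

Definition gradient (R : realType) (d : nat) (f : 'rV[R]_d -> R^o)
  (x : 'rV[R]_d) : 'rV[R]_d :=
  \row_(i < d) ('d f x (delta_mx 0 i : 'rV[R]_d)).

Definition convex_fun (R : realType) (d : nat) (f : 'rV[R]_d -> R) : Prop :=
  forall (x y : 'rV[R]_d) (t : R), 0 <= t <= 1 ->
    f (t *: x + (1 - t) *: y) <= t * f x + (1 - t) * f y.

Definition bounded_level_sets (R : realType) (d : nat) (f : 'rV[R]_d -> R) : Prop :=
  forall c : R, exists M : R, forall x, f x <= c -> enorm x <= M.

Definition phi (R : realType) (d : nat) (f : 'rV[R]_d -> R^o)
  (x : 'rV[R]_d) (lam : R) : R :=
  f (x - lam *: gradient f x).

(* phi_x'(0) = - ||grad f(x)||^2 (as fixed in the paper's context) *)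
Definition dphi0 (R : realType) (d : nat) (f : 'rV[R]_d -> R^o)
  (x : 'rV[R]_d) : R :=
  - (enorm (gradient f x)) ^+ 2.

Definition ls_cond (R : realType) (d : nat) (f : 'rV[R]_d -> R^o)
  (x : 'rV[R]_d) (lam : R) : Prop :=
  phi f x (2 * lam) <= phi f x lam + lam / 2 * dphi0 f x.

(* Main.v *)
Require Import Defs.
From HB Require Import structures.
From mathcomp Require Import all_boot all_order all_algebra.
From mathcomp Require Import all_classical all_reals all_analysis.
From mathcomp Require Import ring lra.
Import Order.TTheory GRing.Theory Num.Theory.
Import numFieldNormedType.Exports.
Local Open Scope classical_set_scope.
Local Open Scope ring_scope.

Section Helpers.
Variables (R : realType) (d : nat).
Implicit Types (u v w : 'rV[R]_d).

Lemma dotvC u v : dotv u v = dotv v u.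
Proof. by apply: eq_bigr => i _; rewrite mulrC. Qed.

Lemma dotvDr u v w : dotv u (v + w) = dotv u v + dotv u w.
Proof. by rewrite /dotv -big_split; apply: eq_bigr => i _; rewrite mxE mulrDr. Qed.

Lemma dotvZr u a v : dotv u (a *: v) = a * dotv u v.
Proof. by rewrite /dotv mulr_sumr; apply: eq_bigr => i _; rewrite mxE mulrCA. Qed.

Lemma dotvNr u v : dotv u (- v) = - dotv u v.
Proof. by rewrite -scaleN1r dotvZr mulN1r. Qed.

Lemma dotvBr u v w : dotv u (v - w) = dotv u v - dotv u w.
Proof. by rewrite dotvDr dotvNr. Qed.

Lemma dotvDl u v w : dotv (v + w) u = dotv v u + dotv w u.
Proof. by rewrite dotvC dotvDr !(dotvC u). Qed.

Lemma dotvBl u v w : dotv (v - w) u = dotv v u - dotv w u.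
Proof. by rewrite dotvC dotvBr !(dotvC u). Qed.

Lemma dotvZl u a v : dotv (a *: v) u = a * dotv v u.
Proof. by rewrite dotvC dotvZr dotvC. Qed.

Lemma dotv_ge0 u : 0 <= dotv u u.
Proof. by apply: sumr_ge0 => i _; rewrite -expr2 sqr_ge0. Qed.

Lemma enorm_ge0 u : 0 <= enorm u.
Proof. exact: sqrtr_ge0. Qed.

Lemma enorm_sq u : enorm u ^+ 2 = dotv u u.
Proof. by rewrite sqr_sqrtr // dotv_ge0. Qed.

Lemma enormZ a u : enorm (a *: u) = `|a| * enorm u.
Proof.
rewrite /enorm dotvZl dotvZr mulrA -expr2 sqrtrM ?sqr_ge0 //.
by rewrite sqrtr_sqr.
Qed.

Lemma dotv_eq0 u : dotv u u = 0 -> forall i, u 0 i = 0.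
Proof.
move=> H i.
have Hp : forall j : 'I_d, true -> 0 <= u 0 j * u 0 j.
  by move=> j _; rewrite -expr2 sqr_ge0.
have := psumr_eq0P Hp H (i:=i) isT.
by move=> /eqP; rewrite mulf_eq0 orbb => /eqP.
Qed.

Lemma cauchy_schwarz u v : dotv u v <= enorm u * enorm v.
Proof.
set A := dotv u u; set B := dotv u v; set C := dotv v v.
have hB2 : B ^+ 2 <= A * C.
  have [C0|Cpos] := eqVneq C 0.
    have v0 := @dotv_eq0 v C0.
    have -> : B = 0 by rewrite /B /dotv big1 // => i _; rewrite v0 mulr0.
    by rewrite expr0n /= mulr_ge0 // dotv_ge0.
  have Cgt0 : 0 < C by rewrite lt_def Cpos dotv_ge0.
  have H := dotv_ge0 (C *: u - B *: v).
  rewrite dotvBl !dotvBr !dotvZl !dotvZr -/A -/B -/C (dotvC v u) -/B in H.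
  have H' : 0 <= C * (A * C - B ^+ 2).
    by apply: (le_trans H); rewrite le_eqVlt; apply/orP; left; apply/eqP; ring.
  by move: H'; rewrite pmulr_rge0 // subr_ge0.
apply: (le_trans (ler_norm B)).
rewrite /enorm -sqrtrM ?dotv_ge0 // -sqrtr_sqr.
by rewrite ler_sqrt // mulr_ge0 // dotv_ge0.
Qed.

Lemma diff_dotv (f : 'rV[R]_d -> R^o) y v :
  'd f y v = dotv (gradient f y) v.
Proof.
rewrite [in LHS](row_sum_delta v) linear_sum /dotv.
by apply: eq_bigr => i _; rewrite linearZ /= mxE mulrC.
Qed.

Lemma line_derive (f : 'rV[R]_d -> R^o) (p v : 'rV[R]_d) (t : R) :
  (forall z, differentiable f z) ->
  is_derive t 1 (fun s : R => f (p + s *: v)) (dotv (gradient f (p + t *: v)) v).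
Proof.
move=> df.
have dl : is_diff t (fun s : R => p + s *: v) (fun s : R => 0 + s *: v).
  have -> : (fun s : R => p + s *: v) = cst p + ( *:%R ^~ v) by [].
  exact: is_diffD.
have hd : differentiable (f \o (fun s : R => p + s *: v)) t.
  by apply: differentiable_comp.
have -> : (fun s : R => f (p + s *: v)) = f \o (fun s : R => p + s *: v) by [].
apply: DeriveDef; first exact/diff_derivable.
rewrite deriveE // diff_comp //= diff_val /= add0r scale1r.
exact: diff_dotv.
Qed.

Lemma line_deriveR (f : 'rV[R]_d -> R^o) (p v : 'rV[R]_d) (t : R) :
  (forall z, differentiable f z) ->
  @is_derive R R R t 1 (fun s : R => (f (p + s *: v) : R))
     (dotv (gradient f (p + t *: v)) v).
Proof. move=> df; exact: line_derive. Qed.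

Lemma poly_der (G c x : R) :
  is_derive x 1 (fun s : R => s * G - c * (s * s)) (G - c * (2 * x)).
Proof.
have H1 : is_derive x 1 (fun s : R => s * G) G.
  have -> : (fun s : R => s * G) = G \*: (@id R).
    by apply/funext => s /=; rewrite mulrC.
  have H := @is_deriveZ R R R id G x 1 1 (is_derive_id _ _).
  by move: H; rewrite [_%:A]mulr1.
have H2 : is_derive x 1 (fun s : R => c * (s * s)) (c * (2 * x)).
  have -> : (fun s : R => c * (s * s)) = c \*: ((@id R) * (@id R)).
    by apply/funext => s /=.
  have H := @is_deriveZ R R R (id * id) c x 1 _
     (is_deriveM (is_derive_id x 1) (is_derive_id x 1)).
  by apply: (is_derive_eq H); rewrite [_%:A]mulr1 -mulr2n mulr_natl.
exact: (is_deriveB H1 H2).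
Qed.

Lemma small_t (a b K : R) : 0 <= K ->
  (forall t, 0 < t -> t <= 1 -> a <= b + t * K) -> a <= b.
Proof.
move=> K0 H; apply/ler_addgt0Pr => e e0.
have K1 : 0 < K + 1 by lra.
have [le1|gt1] := lerP (e / (K + 1)) 1.
  have tp : 0 < e / (K + 1) by rewrite divr_gt0.
  apply: (le_trans (H _ tp le1)); rewrite lerD2l.
  have -> : e = e / (K + 1) * (K + 1) by rewrite divfK // gt_eqF.
  rewrite divfK ?gt_eqF //.
  have : e / (K + 1) * K <= e / (K + 1) * (K + 1) by rewrite ler_wpM2l ?ltW //; lra.
  by rewrite divfK ?gt_eqF.
have H1 := H 1 ltr01 (lexx _).
apply: (le_trans H1); rewrite mul1r lerD2l.
move: gt1; rewrite ltr_pdivlMr // mul1r; lra.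
Qed.


Lemma comb3 (a b x y z : R) : a - b <= x -> b <= y -> x <= z -> a <= y + z.
Proof. move=> *; lra. Qed.

Lemma lip_dot (f : 'rV[R]_d -> R^o) L p q w :
  0 <= L ->
  (forall y z, enorm (gradient f y - gradient f z) <= L * enorm (y - z)) ->
  dotv (gradient f p - gradient f q) w <= L * enorm (p - q) * enorm w.
Proof.
move=> L0 Hl; apply: (le_trans (cauchy_schwarz _ _)).
by rewrite ler_wpM2r ?enorm_ge0.
Qed.

Lemma grad_ineq (f : 'rV[R]_d -> R^o) L p q :
  convex_fun f -> (forall z, differentiable f z) -> 0 <= L ->
  (forall y z, enorm (gradient f y - gradient f z) <= L * enorm (y - z)) ->
  f p + dotv (gradient f p) (q - p) <= f q.
Proof.
move=> cf df L0 Hl.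
set w := q - p.
pose psi := fun s : R => (f (p + s *: w) : R).
have dpsi : forall s : R, is_derive s (1:R) psi (dotv (gradient f (p + s *: w)) w).
  by move=> s; exact: line_deriveR.
suff : dotv (gradient f p) w <= f q - f p by lra.
apply: (@small_t _ _ (L * enorm w ^+ 2)); first by rewrite mulr_ge0 // exprn_ge0 // enorm_ge0.
move=> t t0 t1.
have cpsi : {within `[0, t], continuous psi}.
  apply: derivable_within_continuous => s _.
  exact: (@ex_derive _ _ _ _ _ _ _ (dpsi s)).
have [c cI Heq] := MVT t0 (fun x _ => dpsi x) cpsi.
move: cI; rewrite in_itv /= => /andP[c0 ct].
have psi0 : psi 0 = f p by rewrite /psi scale0r addr0.
have psit : psi t <= t * f q + (1 - t) * f p.
  have -> : psi t = f (t *: q + (1 - t) *: p).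
    rewrite /psi /w; congr (f _); apply/rowP => i; rewrite !mxE; ring.
  by apply: cf; rewrite (ltW t0) t1.
have hc : dotv (gradient f (p + c *: w)) w <= f q - f p.
  have : dotv (gradient f (p + c *: w)) w * t <= (f q - f p) * t.
    rewrite subr0 in Heq; rewrite -Heq psi0 in psit *; lra.
  by rewrite ler_pM2r.
have hl := @lip_dot f L p (p + c *: w) w L0 Hl.
rewrite dotvBl in hl.
have e1 : enorm (p - (p + c *: w)) = c * enorm w.
  by rewrite opprD addrA subrr add0r -scaleNr enormZ normrN gtr0_norm.
rewrite e1 in hl.
have : L * (c * enorm w) * enorm w <= t * (L * enorm w ^+ 2).
  have -> : L * (c * enorm w) * enorm w = c * (L * enorm w ^+ 2) by ring.
  apply: ler_wpM2r; [by rewrite mulr_ge0 // exprn_ge0 // enorm_ge0 | exact: ltW].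
exact: comb3 hl hc.
Qed.


Lemma phiE (f : 'rV[R]_d -> R^o) p s :
  phi f p s = f (p + s *: (- gradient f p)).
Proof. by rewrite /phi scalerN. Qed.

Lemma ls_lower (f : 'rV[R]_d -> R^o) L p :
  (forall z, differentiable f z) -> 0 < L ->
  (forall y z, enorm (gradient f y - gradient f z) <= L * enorm (y - z)) ->
  ls_cond f p (1 / (3 * L)).
Proof.
move=> df L0 Hl.
have [g gE] : exists g, g = gradient f p by exists (gradient f p).
have [G GE] : exists G, G = dotv g g by exists (dotv g g).
have [l lE] : exists l, l = 1 / (3 * L) by exists (1 / (3 * L)).
have [c cE] : exists c, c = L * G / 2 by exists (L * G / 2).
pose ph := fun s : R => (f (p + s *: (- g)) : R).
pose h := ph + (fun s : R => s * G - c * (s * s)).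
have dh : forall s : R, is_derive s (1:R) h
    (dotv (gradient f (p + s *: (- g))) (- g) + (G - c * (2 * s))).
  move=> s; apply: is_deriveD; first exact: line_deriveR.
  exact: poly_der.
have l0 : 0 < l by rewrite lE divr_gt0 // mulr_gt0.
have ll : l < 2 * l by lra.
have ch : {within `[l, 2 * l], continuous h}.
  apply: derivable_within_continuous => s _.
  exact: (@ex_derive _ _ _ _ _ _ _ (dh s)).
have [c0 cI Heq] := MVT ll (fun x _ => dh x) ch.
move: cI; rewrite in_itv /= => /andP[c0l _].
have c00 : 0 < c0 by lra.
have hneg : dotv (gradient f (p + c0 *: (- g))) (- g) + (G - c * (2 * c0)) <= 0.
  have [g2 g2E] : exists g2, g2 = gradient f (p + c0 *: (- g)) := ex_intro _ _ erefl.
  rewrite -g2E.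
  have hl : G - dotv g2 g <= L * (c0 * enorm g) * enorm g.
    have := @lip_dot f L p (p + c0 *: (- g)) g (ltW L0) Hl.
    rewrite -gE -g2E dotvBl -GE.
    have -> : p - (p + c0 *: - g) = c0 *: g.
      by rewrite opprD addrA subrr add0r scalerN opprK.
    by rewrite enormZ gtr0_norm.
  have e2 : L * (c0 * enorm g) * enorm g = c * (2 * c0).
    rewrite cE GE -enorm_sq; field. all: try exact: isT.
  rewrite e2 dotvNr in hl *.
  move: hl; move: (dotv g2 g) => a; move: (c * (2 * c0)) => b; lra.
have key : h (2 * l) <= h l.
  have : (dotv (gradient f (p + c0 *: (- g))) (- g) + (G - c * (2 * c0))) * (2 * l - l) <= 0.
    by rewrite mulr_le0_ge0 //; lra.
  rewrite -Heq; lra.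
have e3 : 3 * c * (l * l) = l * G / 2.
  rewrite cE lE; field; lra.
have key' : ph (2 * l) + (2 * l * G - c * (2 * l * (2 * l))) <= ph l + (l * G - c * (l * l)) := key.
rewrite /ls_cond /dphi0 enorm_sq !phiE -gE -GE -lE.
rewrite -/(ph (2 * l)) -/(ph l).
move: e3 key'; move: (ph (2 * l)) => A; move: (ph l) => B.
move=> e3 key2; lra.
Qed.

Lemma dotv_expand u w t :
  dotv (u - t *: w) (u - t *: w) = dotv u u - 2 * t * dotv w u + t * t * dotv w w.
Proof.
rewrite dotvBl !dotvBr !dotvZl !dotvZr (dotvC u w).
move: (dotv u u) (dotv w u) (dotv w w) => a b c; ring.
Qed.

Lemma descent (f : 'rV[R]_d -> R^o) p l :
  convex_fun f -> ls_cond f p l ->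
  f (p - l *: gradient f p) <= f p - l / 2 * dotv (gradient f p) (gradient f p).
Proof.
move=> cf hls.
have [g gE] : exists g, g = gradient f p := ex_intro _ _ erefl.
have hc := cf p (p - (2 * l) *: g) (1 / 2).
have e : 1 / 2 *: p + (1 - 1 / 2) *: (p - (2 * l) *: g) = p - l *: g.
  apply/rowP => i; rewrite !mxE; field. all: try exact: isT.
rewrite e in hc.
have h1 : (0 : R) <= 1 / 2 by lra.
have h2 : (1 / 2 : R) <= 1 by lra.
rewrite h1 h2 in hc.
move: (hc isT) hls; rewrite /ls_cond /phi /dphi0 enorm_sq -gE.
move: (f (p - l *: g)) => A; move: (f (p - (2 * l) *: g)) => B.
move: (dotv g g) => C; move: (f p) => P.
move=> k1 k2; lra.
Qed.

End Helpers.

Local Close Scope classical_set_scope.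

Theorem corollary2p4 (R : realType) (d : nat) :
  exists D : 'rV[R]_d -> 'rV[R]_d -> R -> R,
  forall (f : 'rV[R]_d -> R^o) (L : R) (x0 xstar : 'rV[R]_d)
         (x : nat -> 'rV[R]_d) (lam : nat -> R),
    convex_fun f ->
    (forall z, differentiable f z) ->
    0 < L ->
    (forall y z, enorm (gradient f y - gradient f z) <= L * enorm (y - z)) ->
    bounded_level_sets f ->
    (forall z, f xstar <= f z) ->
    x 0%N = x0 ->
    (forall k, x k.+1 = x k - lam k *: gradient f (x k)) ->
    (* lam k = max {lam > 0 | ls_cond}, and this maximum is attained *)
    (forall k, 0 < lam k /\ ls_cond f (x k) (lam k) /\
       forall l, 0 < l -> ls_cond f (x k) l -> l <= lam k) ->
    (forall k, 1 / (3 * L) <= lam k) /\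
    (forall k, (1 <= k)%N -> f (x k) - f xstar <= D x0 xstar L / k%:R).
Proof.
exists (fun x0 xs L => 3 * L * dotv (x0 - xs) (x0 - xs) / 2).
move=> f L x0 xs x lam cf df L0 Hl _ hmin hx0 hstep hlam.
have lamlb : forall k, 1 / (3 * L) <= lam k.
  move=> k; have [_ [_ hmax]] := hlam k.
  apply: hmax; first by rewrite divr_gt0 // mulr_gt0.
  exact: ls_lower.
split; first exact: lamlb.
have Dge0 : forall k, 0 <= f (x k) - f xs by move=> k; rewrite subr_ge0.
have desc : forall k, f (x k.+1) <= f (x k) - lam k / 2 *
    dotv (gradient f (x k)) (gradient f (x k)).
  move=> k; rewrite hstep; apply: descent; first exact: cf.
  by have [_ []] := hlam k.
have mono : forall k, f (x k.+1) - f xs <= f (x k) - f xs.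
  move=> k; have h := desc k.
  have G0 := @dotv_ge0 _ _ (gradient f (x k)); have [lp _] := hlam k.
  move: h G0; move: (dotv (gradient f (x k)) (gradient f (x k))) => G h G0.
  have : 0 <= lam k / 2 * G by rewrite mulr_ge0 // divr_ge0 // ltW.
  move: h; move: (f (x k.+1)) (f (x k)) (f xs) (lam k / 2 * G) => a b c e.
  move=> *; lra.
have step : forall k, 2 / (3 * L) * (f (x k.+1) - f xs) <=
    dotv (x k - xs) (x k - xs) - dotv (x k.+1 - xs) (x k.+1 - xs).
  move=> k.
  have [lp _] := hlam k.
  have gi := @grad_ineq _ _ f L (x k) xs cf df (ltW L0) Hl.
  have hd := desc k.
  have [g gE] : exists g, g = gradient f (x k) := ex_intro _ _ erefl.
  rewrite -gE in gi hd.
  have ex : x k.+1 - xs = (x k - xs) - lam k *: g.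
    by rewrite hstep -gE addrAC.
  rewrite ex dotv_expand.
  have ex2 : dotv g (xs - x k) = - dotv g (x k - xs).
    by rewrite -dotvNr opprB.
  rewrite ex2 in gi.
  have h1 : f (x k.+1) - f xs <= dotv g (x k - xs) - lam k / 2 * dotv g g.
    move: gi hd; move: (f (x k.+1)) (f (x k)) (f xs) (dotv g (x k - xs)) (lam k / 2 * dotv g g).
    move=> a b c e z *; lra.
  have h2 : 2 / (3 * L) * (f (x k.+1) - f xs) <= 2 * lam k * (f (x k.+1) - f xs).
    apply: ler_wpM2r; first exact: Dge0.
    have := lamlb k; move: (lam k) => t ht.
    have -> : 2 / (3 * L) = 2 * (1 / (3 * L)) by rewrite mulrA mulr1.
    rewrite ler_pM2l //; exact: ltr0Sn.
  apply: (le_trans h2).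
  have h3 : 2 * lam k * (f (x k.+1) - f xs) <=
      2 * lam k * (dotv g (x k - xs) - lam k / 2 * dotv g g).
    by rewrite ler_wpM2l // mulr_ge0 // ltW.
  apply: (le_trans h3).
  rewrite le_eqVlt; apply/orP; left; apply/eqP.
  move: (dotv g (x k - xs)) (dotv g g) (dotv (x k - xs) (x k - xs)) (lam k) => a b c t.
  field. all: try exact: isT.
have ind : forall k, 2 / (3 * L) * (k%:R * (f (x k) - f xs)) <=
    dotv (x 0 - xs) (x 0 - xs) - dotv (x k - xs) (x k - xs).
  move=> n; elim: n => [|m IH].
    by rewrite mul0r mulr0 subrr.
  have hs := step m; have hm := mono m; have hD := Dge0 m.+1.
  have mp : 0 <= m%:R :> R by exact: ler0n.
  have cp : 0 <= 2 / (3 * L) by rewrite divr_ge0 // ltW // mulr_gt0.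
  have hm1 : m%:R * (f (x m.+1) - f xs) <= m%:R * (f (x m) - f xs) := ler_wpM2l mp hm.
  have hm2 : 2 / (3 * L) * (m%:R * (f (x m.+1) - f xs)) <= 2 / (3 * L) * (m%:R * (f (x m) - f xs))
    := ler_wpM2l cp hm1.
  have -> : 2 / (3 * L) * (m.+1%:R * (f (x m.+1) - f xs)) =
      2 / (3 * L) * (m%:R * (f (x m.+1) - f xs)) + 2 / (3 * L) * (f (x m.+1) - f xs).
    rewrite -natr1; move: (2 / (3 * L)) (f (x m.+1) - f xs) => a b; ring.
  move: IH hs hm2.
  move: (2 / (3 * L) * (m%:R * (f (x m.+1) - f xs))) (2 / (3 * L) * (m%:R * (f (x m) - f xs))).
  move: (2 / (3 * L) * (f (x m.+1) - f xs)) (dotv (x 0 - xs) (x 0 - xs)).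
  move: (dotv (x m - xs) (x m - xs)) (dotv (x m.+1 - xs) (x m.+1 - xs)).
  move=> a b c e u v *; lra.
move=> k k1.
have kp : 0 < k%:R :> R by rewrite ltr0n.
rewrite ler_pdivlMr // -hx0.
have := ind k; have := @dotv_ge0 _ _ (x k - xs).
have r0 := @dotv_ge0 _ _ (x 0 - xs).
have -> : 2 / (3 * L) * (k%:R * (f (x k) - f xs)) = 2 / (3 * L) * ((f (x k) - f xs) * k%:R).
  by congr (_ * _); exact: mulrC.
move: ((f (x k) - f xs) * k%:R) => A.
move: (dotv (x 0 - xs) (x 0 - xs)) (dotv (x k - xs) (x k - xs)) r0 => r0 rk r00 rk0 H.
have LL : 3 * L * r0 / 2 = 3 * L / 2 * r0 by rewrite mulrAC.
rewrite LL.
have e : A = 3 * L / 2 * (2 / (3 * L) * A).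
  rewrite mulrA; field. all: try exact: isT. exact: (lt0r_neq0 L0).
rewrite e; apply: ler_wpM2l; first by rewrite divr_ge0 // mulr_ge0 // ltW.
move: H rk0 r00; move: (2 / (3 * L) * A) => z *; lra.
Qed.
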